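(* Let $k\ge3$, $2\le s\le k$, $\mathbf n=(n_1,\dots,n_k)$, $r\le\min\{n_1,\dots,n_s\}$. If $\mathcal A\in P_s(\mathbf n,r)$ has a decomposition $\mathcal A=\sum_{i=1}^r\sigma_i\mathbf a^{(1)}_i\otimes\cdots\otimes\mathbf a^{(k)}_i$ with all $\mathbf a^{(l)}_i$ unit vectors and $\mathbf a^{(l)}_1,\dots,\mathbf a^{(l)}_r$ pairwise orthogonal for each $l\le s$, then $\operatorname{rank}(\mathcal A)=\#\{i:\sigma_i\ne0\}$, and a partially orthogonal rank decomposition of $\mathcal A$ is a rank decomposition.
   Context: $P_s(\mathbf n,r)$ is the set of tensors admitting a decomposition as in the claim. The (CP) rank of a tensor is the least number of rank-one tensors summing to it; a rank decomposition is one with that many terms. A partially orthogonal rank decomposition of $\mathcal A$ is a decomposition of the form in the claim (unit factors, orthonormal factors in the first $s$ modes) with the smallest possible number of terms. *)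

(* Defs.v *)
From HB Require Import structures.
From mathcomp Require Import all_boot all_order all_algebra.
From mathcomp Require Import reals.
Set Implicit Arguments. Unset Strict Implicit. Unset Printing Implicit Defensive.
Import Order.TTheory GRing.Theory Num.Theory.
Local Open Scope ring_scope.

Section Tensors.
Variables (R : realType) (k : nat) (n : 'I_k -> nat).

Definition tindex := forall l : 'I_k, 'I_(n l).

Definition tensor := tindex -> R.

Definition factors := forall l : 'I_k, 'I_(n l) -> R.

Definition outer (a : factors) : tensor :=
  fun idx => \prod_(l < k) a l (idx l).

Definition dotv (m : nat) (u v : 'I_m -> R) : R := \sum_(j < m) u j * v j.

Definition unitv (m : nat) (u : 'I_m -> R) : Prop := dotv u u = 1.

Definition has_cp_decomp (A : tensor) (r : nat) : Prop :=
  exists a : 'I_r -> factors, A = (fun idx => \sum_(i < r) outer (a i) idx).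

Definition is_tensor_rank (A : tensor) (m : nat) : Prop :=
  has_cp_decomp A m /\ forall r, has_cp_decomp A r -> (m <= r)%N.

Definition is_po_decomp (s : nat) (A : tensor) (r : nat)
    (sigma : 'I_r -> R) (a : 'I_r -> factors) : Prop :=
  [/\ (forall i l, unitv (a i l)),
      (forall l : 'I_k, (l < s)%N -> forall i j : 'I_r, i != j ->
          dotv (a i l) (a j l) = 0) &
      A = (fun idx => \sum_(i < r) sigma i * outer (a i) idx)].

Definition in_Ps (s : nat) (r : nat) (A : tensor) : Prop :=
  exists sigma a, @is_po_decomp s A r sigma a.

Definition is_po_rank (s : nat) (A : tensor) (m : nat) : Prop :=
  in_Ps s m A /\ forall r, in_Ps s r A -> (m <= r)%N.

End Tensors.

(* Main.v *)
Require Import Defs.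
From mathcomp Require Import all_boot all_order all_algebra.
From mathcomp Require Import reals.
From mathcomp Require Import ring boolp.
Import Order.TTheory GRing.Theory Num.Theory.
Local Open Scope ring_scope.
Set Implicit Arguments. Unset Strict Implicit.

Section Aux.
Variables (R : realType) (k : nat) (n : 'I_k -> nat).

Definition upd (e : tindex n) (l0 : 'I_k) (x : 'I_(n l0)) : tindex n :=
  fun l => match l0 =P l with ReflectT h => cast_ord (congr1 n h) x | ReflectF _ => e l end.

Lemma upd_eq e l0 (x : 'I_(n l0)) : upd e x l0 = x.
Proof. apply: val_inj; rewrite /upd; case: (l0 =P l0) => //=. Qed.

Lemma upd_neq e l0 (x : 'I_(n l0)) l : l0 != l -> upd e x l = e l.
Proof. rewrite /upd; case: (l0 =P l) => // ->; by rewrite eqxx. Qed.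

Variables (l0 l1 : 'I_k).
Hypothesis l01 : l0 != l1.

Definition rest (b : factors R n) (e : tindex n) :=
  \prod_(l | (l != l0) && (l != l1)) b l (e l).

Definition contr (T : tensor R n) (u : 'I_(n l0) -> R) (v : 'I_(n l1) -> R) e :=
  \sum_(x0 < n l0) \sum_(x1 < n l1) u x0 * v x1 * T (upd (upd e x0) x1).

Lemma outer_upd b e x0 x1 :
  outer b (upd (upd e x0) x1) = b l0 x0 * b l1 x1 * rest b e.
Proof.
rewrite /outer (bigD1 l0) //= (bigD1 l1) //=; last by rewrite eq_sym.
rewrite upd_eq upd_neq; last by rewrite eq_sym.
rewrite upd_eq mulrA; congr (_ * _).
apply: eq_bigr => l /andP[H1 H0].
by rewrite upd_neq 1?eq_sym // upd_neq 1?eq_sym.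
Qed.

Lemma contr_outer b u v e :
  contr (outer b) u v e = dotv u (b l0) * dotv v (b l1) * rest b e.
Proof.
rewrite /contr /dotv -mulrA mulr_suml; apply: eq_bigr => x0 _.
rewrite mulr_suml mulr_sumr; apply: eq_bigr => x1 _.
rewrite outer_upd; ring.
Qed.

Lemma contr_sum r (c : 'I_r -> R) (F : 'I_r -> tensor R n) u v e :
  contr (fun idx => \sum_(i < r) c i * F i idx) u v e =
  \sum_(i < r) c i * contr (F i) u v e.
Proof.
rewrite /contr.
under eq_bigr => x0 _ do under eq_bigr => x1 _ do rewrite mulr_sumr.
under eq_bigr => x0 _ do rewrite exchange_big /=.
rewrite exchange_big /=; apply: eq_bigr => i _.
rewrite mulr_sumr; apply: eq_bigr => x0 _.
rewrite mulr_sumr; apply: eq_bigr => x1 _. ring.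
Qed.

End Aux.

Lemma contr_sum1 (R : realType) k (n : 'I_k -> nat) l0 l1 r (F : 'I_r -> tensor R n) u v e :
  @contr R k n l0 l1 (fun idx => \sum_(i < r) F i idx) u v e =
  \sum_(i < r) @contr R k n l0 l1 (F i) u v e.
Proof.
rewrite /contr.
under eq_bigr => x0 _ do under eq_bigr => x1 _ do rewrite mulr_sumr.
under eq_bigr => x0 _ do rewrite exchange_big /=.
by rewrite exchange_big /=.
Qed.

Lemma lower (R : realType) k (n : 'I_k -> nat) (l0 l1 : 'I_k) (A : tensor R n)
  r (sigma : 'I_r -> R) (a : 'I_r -> factors R n) m :
  l0 != l1 ->
  (forall i l, unitv (a i l)) ->
  (forall i j, i != j -> dotv (a i l0) (a j l0) = 0) ->
  (forall i j, i != j -> dotv (a i l1) (a j l1) = 0) ->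
  A = (fun idx => \sum_(i < r) sigma i * outer (a i) idx) ->
  (forall i, sigma i != 0) ->
  has_cp_decomp A m -> (r <= m)%N.
Proof.
move=> l01 Hu O0 O1 HA Hs [b Hb].
have ex : forall i l, exists x, a i l x != 0.
  move=> i l; case: (pickP (fun x => a i l x != 0)) => [x Hx|H]; first by exists x.
  exfalso; have := Hu i l; rewrite /unitv /dotv big1 => [/esym/eqP|x _].
    by rewrite oner_eq0.
  by have := H x => /= /negbFE/eqP ->; rewrite mul0r.
pose e := fun i : 'I_r => ((fun l => xchoose (ex i l)) : tindex n).
pose X := \matrix_(i < r, p < m) dotv (a i l0) (b p l0).
pose Z := \matrix_(p < m, j < r) (dotv (a j l1) (b p l1) * rest l0 l1 (b p) (e j)).
have HXZ : X *m Z = diag_mx (\row_i (sigma i * rest l0 l1 (a i) (e i))).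
  apply/matrixP => i j; rewrite !mxE.
  transitivity (@contr R k n l0 l1 A (a i l0) (a j l1) (e j)).
    rewrite Hb contr_sum1; apply: eq_bigr => p _.
    by rewrite contr_outer // !mxE mulrA.
  rewrite HA contr_sum.
  under eq_bigr => q _ do rewrite contr_outer //.
  rewrite (bigD1 i) //= big1 ?addr0; last first.
    move=> q nq; rewrite O0; first by rewrite !(mulr0, mul0r).
    by rewrite eq_sym.
  have -> : dotv (a i l0) (a i l0) = 1 by apply: Hu.
  case: eqP => [<-|/eqP ne].
    have -> : dotv (a i l1) (a i l1) = 1 by apply: Hu.
    by rewrite !mul1r mulr1n.
  rewrite O1; first by rewrite !(mulr0n, mulr0, mul0r).
  by rewrite eq_sym.
have HU : X *m Z \in unitmx.
  rewrite HXZ unitmxE det_diag unitfE; apply/prodf_neq0 => i _.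
  rewrite mxE mulf_neq0 //; apply/prodf_neq0 => l _.
  exact: (xchooseP (ex i l)).
have := mxrankM_maxl X Z; rewrite (mxrank_unit HU) => h.
exact: leq_trans h (rank_leq_col X).
Qed.

Lemma restrict (R : realType) k (n : 'I_k -> nat) s (A : tensor R n)
  r (sigma : 'I_r -> R) (a : 'I_r -> factors R n) :
  is_po_decomp s A sigma a ->
  is_po_decomp s A (fun q : 'I_#|[set i | sigma i != 0]| => sigma (enum_val q))
                   (fun q => a (enum_val q)).
Proof.
case=> Hu Ho HA; split.
- by move=> i l; apply: Hu.
- move=> l ls i j ij; apply: Ho => //; apply: contra ij => /eqP/enum_val_inj ->.
  by [].
- rewrite HA; apply: funext => idx /=.
  rewrite (bigID (fun i => sigma i != 0)) /= [X in _ + X]big1 ?addr0; last first.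
    by move=> i /negbNE/eqP->; rewrite mul0r.
  rewrite (eq_bigl (fun i => i \in [set i | sigma i != 0])); last first.
    by move=> i; rewrite inE.
  by rewrite big_enum_val.
Qed.

Lemma cp_of_po (R : realType) k (n : 'I_k -> nat) (l0 : 'I_k) (A : tensor R n)
  r (sigma : 'I_r -> R) (a : 'I_r -> factors R n) :
  A = (fun idx => \sum_(i < r) sigma i * outer (a i) idx) ->
  has_cp_decomp A r.
Proof.
move=> HA.
exists (fun i l x => (if l == l0 then sigma i else 1) * a i l x).
rewrite HA; apply: funext => idx /=; apply: eq_bigr => i _.
rewrite /outer big_split /=; congr (_ * _).
rewrite (bigD1 l0) //= big1 ?mulr1 ?eqxx // => l /negbTE ->. by [].
Qed.

Lemma rank_lemma (R : realType) k (n : 'I_k -> nat) s (A : tensor R n)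
  r (sigma : 'I_r -> R) (a : 'I_r -> factors R n) :
  (2 <= k)%N -> (2 <= s)%N ->
  is_po_decomp s A sigma a ->
  is_tensor_rank A #|[set i | sigma i != 0]| /\ in_Ps s #|[set i | sigma i != 0]| A.
Proof.
move=> Hk Hs H.
have H' := restrict H.
have k0 : (0 < k)%N by apply: leq_trans Hk.
pose l0 := Ordinal k0; pose l1 := Ordinal Hk.
split; last by do 2 eexists; exact: H'.
case: H' => Hu Ho HA.
split; first exact: (cp_of_po l0 HA).
move=> m Hm; apply: (lower (l0 := l0) (l1 := l1) _ Hu _ _ HA _ Hm) => //.
- by move=> i j; apply: Ho; apply: leq_trans Hs.
- by move=> i j; apply: Ho.
- by move=> q; have := enum_valP q; rewrite inE.
Qed.

Theorem proposition3p3 (R : realType) (k : nat) (n : 'I_k -> nat)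
    (s r : nat) (A : tensor R n) (sigma : 'I_r -> R) (a : 'I_r -> factors R n) :
  (3 <= k)%N -> (2 <= s)%N -> (s <= k)%N ->
  (forall l : 'I_k, (l < s)%N -> (r <= n l)%N) ->
  is_po_decomp s A sigma a ->
  is_tensor_rank A #|[set i : 'I_r | sigma i != 0]| /\
  (forall m : nat, is_po_rank s A m -> is_tensor_rank A m).
Proof.
move=> Hk Hs _ _ H.
have Hk2 : (2 <= k)%N by apply: leq_trans Hk.
split; first by case: (rank_lemma Hk2 Hs H).
move=> m [[sig' [a' H']] Hmin].
have [[Hc Hlow] Hin] := rank_lemma Hk2 Hs H'.
have k0 : (0 < k)%N by apply: leq_trans Hk.
have Hcm : has_cp_decomp A m by case: H' => _ _ HA; exact: (cp_of_po (Ordinal k0) HA).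
have e : m = #|[set i | sig' i != 0]|.
  by apply/eqP; rewrite eqn_leq Hmin // Hlow.
by rewrite e; split.
Qed.
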